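(* Let $(A,\times)$ be a (left) Leibniz dual algebra over a field, i.e. $(a\times b)\times c=a\times(b\times c+c\times b)$ for all $a,b,c\in A$. Then $A$ satisfies the (right) Tortken identity $$(a\times b)\times(c\times d)-(a\times d)\times(c\times b)=(a,b,c)\times d-(a,d,c)\times b\quad\text{for all }a,b,c,d\in A.$$
   Context: The associator is $(a,b,c)=a\times(b\times c)-(a\times b)\times c$. *)

(* Defs.v *)
From mathcomp Require Import all_boot all_algebra.
Set Implicit Arguments. Unset Strict Implicit. Unset Printing Implicit Defensive.
Import GRing.Theory.
Local Open Scope ring_scope.

Definition bilinear_prod (K : fieldType) (V : lmodType K) (mul : V -> V -> V) :=
  (forall k a b c, mul (k *: a + b) c = k *: mul a c + mul b c) /\
  (forall k a b c, mul a (k *: b + c) = k *: mul a b + mul a c).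

Definition assoc (K : fieldType) (V : lmodType K) (mul : V -> V -> V) (a b c : V) :=
  mul a (mul b c) - mul (mul a b) c.

Definition left_leibniz_dual (K : fieldType) (V : lmodType K) (mul : V -> V -> V) :=
  forall a b c, mul (mul a b) c = mul a (mul b c + mul c b).

(* Main.v *)
Require Import Defs.
From mathcomp Require Import all_boot all_algebra.
Local Open Scope ring_scope.
Import GRing.Theory.

Theorem mainTheorem16 (K : fieldType) (V : lmodType K) (mul : V -> V -> V) :
  bilinear_prod mul -> left_leibniz_dual mul ->
  forall a b c d : V,
    mul (mul a b) (mul c d) - mul (mul a d) (mul c b)
    = mul (assoc mul a b c) d - mul (assoc mul a d c) b.
Proof.
move=> [H1 H2] L a b c d.
have mDl x y z : mul (x + y) z = mul x z + mul y z by have := H1 1 x y z; rewrite !scale1r.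
have mDr x y z : mul z (x + y) = mul z x + mul z y by have := H2 1 z x y; rewrite !scale1r.
have m0l z : mul 0 z = 0.
  by apply: (addrI (mul 0 z)); rewrite -mDl !addr0.
have m0r z : mul z 0 = 0.
  by apply: (addrI (mul z 0)); rewrite -mDr !addr0.
have mNl x z : mul (- x) z = - mul x z.
  by apply: (addrI (mul x z)); rewrite -mDl !subrr m0l.
have mNr x z : mul z (- x) = - mul z x.
  by apply: (addrI (mul z x)); rewrite -mDr !subrr m0r.
rewrite /assoc.
rewrite !(L, mDl, mDr, mNl, mNr).
set p1 := mul a (mul b (mul c d)).
set p2 := mul a (mul c (mul d b)).
set p3 := mul a (mul c (mul b d)).
set p4 := mul a (mul d (mul c b)).
set p5 := mul a (mul b (mul d c)).
set p6 := mul a (mul d (mul b c)).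
clearbody p1 p2 p3 p4 p5 p6.
apply/eqP; rewrite -subr_eq0 !opprD !opprK !addrA.
rewrite -[X in X == 0]add0r !addrA.
let key x := match x with
  | - ?y => constr:(y) | ?y => constr:(y) end in
let k y := lazymatch y with
  | p1 => constr:(1%N) | p2 => constr:(2%N) | p3 => constr:(3%N)
  | p4 => constr:(4%N) | p5 => constr:(5%N) | p6 => constr:(6%N) end in
repeat (first
  [ rewrite addrK | rewrite subrK
  | match goal with |- context [?a + ?y + ?x] =>
      let ky := k ltac:(key y) in let kx := k ltac:(key x) in
      let b := eval compute in (Nat.ltb kx ky) in
      lazymatch b with true => rewrite (addrAC a y x) end
    end ]).
by [].
Qed.
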